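(* Let $|\Phi\rangle=\sum_{z\in F^d,y\in F}\phi_{z,y}|z\rangle|y\rangle$ be a pure state with $\phi_z:=\big(\sum_y|\phi_{z,y}|^2\big)^{1/2}>0$ for every $z\in F^d$. Let $\gamma=V_{QLDT}(|\Phi\rangle,G)$ and $N=\frac{|F|^d-1}{|F|-1}$, and assume $\gamma\ge |F|^{-1}$. Then $$\Big(\gamma-\frac1{|F|}\Big)^2\le \frac{1}{|F|^{d}N}\sum_{z\in F^d}\sum_{\ell\in L(z)}\frac{|\phi_{z,g_\ell(z)}|^2}{\phi_z^2},$$ where $L(z)$ is the set of the $N$ lines containing $z$. Consequently there exists a (deterministic) function $f':F^d\to F$ with $\mathrm{Agr}[f',G]\ge(\gamma-|F|^{-1})^2$.
   Context: Setting. - $F$ is a finite field with $|F|=2^a$, $d\ge2$ and $r\ge0$ are integers; $\mathcal H_{d+1}=\mathbb C^{|F|^{d+1}}$ with basis $|z\rangle|y\rangle$, $z\in F^d$, $y\in F$. - $L$ is the set of lines of $F^d$. - $G=\{g_\ell\}_{\ell\in L}$ with each $g_\ell:\ell\to F$ a polynomial of degree $\le r$ along the line. Quantum low degree test. - Step I: uniformly random invertible linear $E:F^d\to F^d$. Apply $|z\rangle|y\rangle\mapsto|E(z)\rangle|y\rangle$, then measure the first $d-1$ registers with outcome $b$, obtaining the line $\ell=\{u+(v-u)t\}$ with $E(u)=(b,0)$, $E(v)=(b,1)$, and the collapsed state $|\Phi'\rangle$ of the last two registers. - Step II: with $|e_1\rangle=|F|^{-1/2}\sum_t|t\rangle|g_\ell(u+(v-u)t)\rangle$,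 accept with probability $|\langle e_1|\Phi'\rangle|^2$. - $V_{QLDT}(|\Phi\rangle,G)$ is the overall acceptance probability. Agreement. For $f':F^d\to F$: $\mathrm{Agr}[f',g_\ell]=\Pr_{z\in\ell}[f'(z)=g_\ell(z)]$ and $\mathrm{Agr}[f',G]=\mathbb E_{\ell\in L}\mathrm{Agr}[f',g_\ell]$, all under uniform distributions. *)

(* Defs.v *)
(* Complex amplitudes live in R[i] for an arbitrary
   real closed field R (this covers the usual complex numbers). *)
From HB Require Import structures.
From mathcomp Require Import all_boot all_order all_algebra all_field.
From mathcomp Require Import complex.
Set Implicit Arguments. Unset Strict Implicit. Unset Printing Implicit Defensive.
Import Order.TTheory GRing.Theory Num.Theory.
Local Open Scope ring_scope.

Section QLDT.
Variables (F : finFieldType) (d : nat) (R : rcfType).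
Local Notation C := R[i].
Local Notation pt := 'rV[F]_d.

Definition line_of (u w : pt) : {set pt} := [set u + t *: w | t : F].

Definition isLine (l : {set pt}) : bool :=
  [exists u : pt, exists w : pt, (w != 0) && (l == line_of u w)].
Definition Lines : {set {set pt}} := [set l | isLine l].

Definition LinesThrough (z : pt) : {set {set pt}} := [set l in Lines | z \in l].

Definition low_degree_family (r : nat) (G : {set pt} -> pt -> F) : Prop :=
  forall l, l \in Lines -> forall u w : pt, w != 0 -> l = line_of u w ->
    exists p : {poly F}, (size p <= r.+1)%N /\ forall t : F, G l (u + t *: w) = p.[t].

Definition pure_state (phi : pt -> F -> C) : Prop :=
  \sum_(z : pt) \sum_(y : F) `|phi z y| ^+ 2 = 1.

Definition phinorm (phi : pt -> F -> C) (z : pt) : C :=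
  sqrtC (\sum_(y : F) `|phi z y| ^+ 2).

(* Step I.  E(z) = z *m E ; invertible linear maps *)
Definition GLset : {set 'M[F]_d} := [set E : 'M[F]_d | E \in unitmx].

Definition setlast (b : pt) (t : F) : pt :=
  \row_(i < d) (if i.+1 == d then t else b 0 i).

(* measurement outcomes b in F^{d-1}, encoded as vectors with last coordinate 0 *)
Definition Outcomes : {set pt} :=
  [set b : pt | [forall i : 'I_d, (i.+1 == d) ==> (b 0 i == 0)]].

Definition uE (E : 'M[F]_d) (b : pt) : pt := setlast b 0 *m invmx E.
Definition vE (E : 'M[F]_d) (b : pt) : pt := setlast b 1 *m invmx E.
Definition lineE (E : 'M[F]_d) (b : pt) : {set pt} :=
  [set uE E b + t *: (vE E b - uE E b) | t : F].

Definition prob_outcome (phi : pt -> F -> C) (E : 'M[F]_d) (b : pt) : C :=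
  \sum_(t : F) \sum_(y : F) `|phi (setlast b t *m invmx E) y| ^+ 2.

Definition collapsed (phi : pt -> F -> C) (E : 'M[F]_d) (b : pt) (t y : F) : C :=
  phi (setlast b t *m invmx E) y / sqrtC (prob_outcome phi E b).

Definition e1 (G : {set pt} -> pt -> F) (E : 'M[F]_d) (b : pt) (t y : F) : C :=
  if y == G (lineE E b) (uE E b + t *: (vE E b - uE E b))
  then (sqrtC (#|F|%:R : C))^-1 else 0.

Definition accept_prob (phi : pt -> F -> C) (G : {set pt} -> pt -> F)
    (E : 'M[F]_d) (b : pt) : C :=
  `| \sum_(t : F) \sum_(y : F) (e1 G E b t y)^* * collapsed phi E b t y | ^+ 2.

Definition V_QLDT (phi : pt -> F -> C) (G : {set pt} -> pt -> F) : C :=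
  (#|GLset|%:R)^-1 *
  \sum_(E in GLset) \sum_(b in Outcomes) prob_outcome phi E b * accept_prob phi G E b.

Definition Agr_line (f' : pt -> F) (G : {set pt} -> pt -> F) (l : {set pt}) : C :=
  #|[set z in l | f' z == G l z]|%:R / #|l|%:R.
Definition Agr (f' : pt -> F) (G : {set pt} -> pt -> F) : C :=
  (#|Lines|%:R)^-1 * \sum_(l in Lines) Agr_line f' G l.

End QLDT.

(* Main.v *)
Require Import Defs.
From HB Require Import structures.
From mathcomp Require Import all_boot all_order all_algebra all_field.
From mathcomp Require Import complex.
From mathcomp Require Import ring.
Set Implicit Arguments. Unset Strict Implicit. Unset Printing Implicit Defensive.
Import Order.TTheory GRing.Theory Num.Theory.
Local Open Scope ring_scope.


Section LineFacts.
Variables (F : finFieldType) (d : nat).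
Local Notation pt := 'rV[F]_d.

Lemma memlP (u w z : pt) : reflect (exists t, z = u + t *: w) (z \in line_of u w).
Proof.
apply: (iffP imsetP) => [[t _ ->]|[t ->]]; by exists t.
Qed.

Lemma line_mem_self (u w : pt) : u \in line_of u w.
Proof. by apply/memlP; exists 0; rewrite scale0r addr0. Qed.

Lemma line_recenter (u w z : pt) : z \in line_of u w -> line_of u w = line_of z w.
Proof.
case/memlP=> s ->; apply/setP=> x; apply/memlP/memlP=> [[t ->]|[t ->]].
  by exists (t - s); rewrite scalerBl [_ - s *: w]addrC addrA addrK.
by exists (s + t); rewrite scalerDl addrA.
Qed.

Lemma line_scale (z w : pt) (c : F) : c != 0 -> line_of z (c *: w) = line_of z w.
Proof.
move=> c0; apply/setP=> x; apply/memlP/memlP=> [[t ->]|[t ->]].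
  by exists (t * c); rewrite scalerA.
by exists (t / c); rewrite scalerA mulfVK.
Qed.

Lemma line_card (u w : pt) : w != 0 -> #|line_of u w| = #|F|.
Proof.
move=> w0; rewrite card_imset // => s t /addrI /eqP.
by rewrite -subr_eq0 -scalerBl scaler_eq0 (negbTE w0) orbF subr_eq0 => /eqP.
Qed.

Lemma line_two (z z' w : pt) : w != 0 -> z' \in line_of z w -> z' != z ->
  line_of z (z' - z) = line_of z w.
Proof.
move=> w0 /memlP[s ->] ne; rewrite [z + _ - _]addrAC subrr add0r line_scale //.
by apply: contraNneq ne => ->; rewrite scale0r addr0.
Qed.

Lemma line_parallel (u w u' w' : pt) : w != 0 -> w' != 0 ->
  line_of u w = line_of u' w' -> exists2 c, c != 0 & w' = c *: w.
Proof.
move=> w0 w'0 E.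
have /memlP[s Hs] : u' \in line_of u w by rewrite E line_mem_self.
have /memlP[s' Hs'] : u' + 1 *: w' \in line_of u w by rewrite E; apply/memlP; exists 1.
have ew : w' = (s' - s) *: w.
  have -> : w' = (u' + 1 *: w') - u' by rewrite scale1r [u' + _ - _]addrAC subrr add0r.
  by rewrite Hs' Hs opprD addrACA subrr add0r scalerBl.
exists (s' - s) => //; apply: contraNneq w'0 => e; by rewrite ew e scale0r.
Qed.

Lemma isLine_line (u w : pt) : w != 0 -> line_of u w \in Lines F d.
Proof. by move=> w0; rewrite inE; apply/existsP; exists u; apply/existsP; exists w; rewrite w0 eqxx. Qed.

Lemma LinesP (l : {set pt}) : l \in Lines F d -> exists u w, w != 0 /\ l = line_of u w.
Proof. by rewrite inE => /existsP[u /existsP[w /andP[w0 /eqP ->]]]; exists u, w. Qed.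

End LineFacts.

Lemma sum_eq_le1 (T : finType) (A : {pred T}) (x : T) : (\sum_(y in A) (y == x) <= 1)%N.
Proof.
apply: (@leq_trans (\sum_y (y == x))%N).
  by rewrite [X in (_ <= X)%N](bigID (mem A)) /= leq_addr.
by rewrite (bigD1 x) //= eqxx big1 // => y /negbTE ->.
Qed.

Lemma card_sumb (T : finType) (A : {pred T}) : #|A| = (\sum_x (x \in A))%N.
Proof. by rewrite -sum1_card big_mkcond; apply: eq_bigr => x _; case: (x \in A). Qed.

Section Count.
Variables (F : finFieldType) (d : nat).
Local Notation pt := 'rV[F]_d.

Lemma pair_unique (z z' : pt) : z != z' ->
  (#|[set l in Lines F d | (z \in l) && (z' \in l)]| <= 1)%N.
Proof.
move=> ne; apply: (@leq_trans #|[set line_of z (z' - z)]|); last by rewrite cards1.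
apply: subset_leq_card; apply/subsetP=> l; rewrite in_set => /andP[/LinesP[u [w [w0 ->]]] /andP[zl z'l]].
have E := line_recenter zl; rewrite E in z'l.
rewrite in_set1 E -(line_two w0 z'l) ?eqxx // eq_sym //.
Qed.

Lemma LinesThrough_card (z : pt) :
  (#|LinesThrough z| * #|F|.-1 <= #|pt|.-1)%N.
Proof.
pose S l := [set w : pt | (w != 0) && (line_of z w == l)].
have H1 l : l \in LinesThrough z -> (#|F|.-1 <= #|S l|)%N.
  rewrite /LinesThrough in_set => /andP[/LinesP[u [w [w0 ->]]] zl].
  rewrite (line_recenter zl) -(cardsC1 (0:F)) -(@card_imset _ _ (fun c : F => c *: w)).
    apply: subset_leq_card; apply/subsetP=> x /imsetP[c]; rewrite !inE => c0 ->.
    by rewrite scaler_eq0 negb_or c0 w0 line_scale ?eqxx.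
  move=> c c' /eqP; rewrite -subr_eq0 -scalerBl scaler_eq0 (negbTE w0) orbF subr_eq0.
  by move/eqP.
apply: (@leq_trans (\sum_(l in LinesThrough z) #|S l|)).
  by rewrite -sum_nat_const leq_sum.
rewrite (eq_bigr (fun l => \sum_(w : pt) (w \in S l))%N) => [|l _]; last exact: card_sumb.
rewrite exchange_big /= -(cardC1 (0 : pt)) card_sumb; apply: leq_sum => w _.
case: (w =P 0) => [->|/eqP w0] /=.
  by rewrite big1 // => l _; rewrite in_set eqxx.
have -> : (w \in predC1 0) = true by rewrite inE.
rewrite (eq_bigr (fun l => nat_of_bool (l == line_of z w))) ?sum_eq_le1 // => l _.
by rewrite in_set w0 eq_sym.
Qed.
End Count.

Section GL.
Variables (F : finFieldType) (d : nat).
Local Notation pt := 'rV[F]_d.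

Definition elast : pt := setlast 0 1.
Definition dirE (E : 'M[F]_d) : pt := elast *m invmx E.

Lemma setlast_dec (b : pt) t : setlast b t = setlast b 0 + t *: elast.
Proof.
apply/rowP=> i; rewrite !mxE; case: ifP => _; first by rewrite add0r mulr1.
by rewrite mulr0 addr0.
Qed.

Lemma zt_eq (E : 'M[F]_d) (b : pt) t : setlast b t *m invmx E = uE E b + t *: dirE E.
Proof. by rewrite setlast_dec mulmxDl -scalemxAl. Qed.

Lemma vE_uE (E : 'M[F]_d) (b : pt) : vE E b - uE E b = dirE E.
Proof. by rewrite /vE /uE /dirE (setlast_dec b 1) scale1r mulmxDl addrAC subrr add0r. Qed.

Lemma lineE_eq (E : 'M[F]_d) (b : pt) : lineE E b = line_of (uE E b) (dirE E).
Proof. by rewrite /lineE vE_uE. Qed.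

Lemma elast_neq0 : (0 < d)%N -> elast != 0.
Proof.
move=> d0; apply/eqP=> /rowP/(_ (Ordinal (etrans (ltn_predL d) d0))).
by rewrite !mxE /= prednK // eqxx => /eqP; rewrite oner_eq0.
Qed.

Lemma dirE_neq0 (E : 'M[F]_d) : (0 < d)%N -> E \in unitmx -> dirE E != 0.
Proof.
move=> d0 EU; apply: contraNneq (elast_neq0 d0) => h.
by rewrite -(mulmxKV EU elast) -/(dirE E) h mul0mx.
Qed.

Lemma lineE_inj (E : 'M[F]_d) (b b' : pt) : E \in unitmx ->
  b \in Outcomes F d -> b' \in Outcomes F d -> lineE E b = lineE E b' -> b = b'.
Proof.
move=> EU Ob Ob' e.
have : uE E b \in lineE E b' by rewrite -e lineE_eq line_mem_self.
rewrite lineE_eq => /memlP[t].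
rewrite -zt_eq /uE => /(can_inj (mulmxKV EU)) /rowP h.
move: Ob Ob'; rewrite !inE => /forallP Ob /forallP Ob'.
apply/rowP=> i; move: (h i) (Ob i) (Ob' i); rewrite !mxE.
case: ifP => _ /=; last by [].
by move=> _ /eqP -> /eqP ->.
Qed.

Definition cntv (v : pt) := #|[set E in GLset F d | dirE E == v]|.

Lemma rV_basis (v : pt) : v != 0 -> exists2 U : 'M[F]_d, U \in unitmx & v = pid_mx 1 *m U.
Proof.
move=> v0; have := mulmx_ebase v; rewrite rank_rV v0 /=.
rewrite [col_ebase v]mx11_scalar mul_scalar_mx -scalemxAl scalemxAr => <-.
exists ((col_ebase v) 0 0 *: row_ebase v) => //.
rewrite unitmxZ ?row_ebase_unit //.
by have := col_ebase_unit v; rewrite unitmxE det_mx11.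
Qed.

Lemma cntv_le (v v' : pt) : v != 0 -> v' != 0 -> (cntv v <= cntv v')%N.
Proof.
move=> /rV_basis[U UU eU] /rV_basis[U' UU' eU'].
pose P := invmx U *m U'.
have PU : P \in unitmx by rewrite unitmx_mul unitmx_inv UU UU'.
have vP : v *m P = v' by rewrite eU /P mulmxA mulmxK.
pose f (E : 'M[F]_d) := invmx (invmx E *m P).
rewrite /cntv -(card_imset _ (f := f)); last first.
  by move=> E1 E2 /(can_inj invmxK) /(can_inj (mulmxK PU)) /(can_inj invmxK).
apply: subset_leq_card; apply/subsetP=> x /imsetP[E]; rewrite !inE => /andP[EU /eqP dE] ->.
rewrite /f unitmx_inv unitmx_mul unitmx_inv EU PU /=.
by rewrite /dirE invmxK mulmxA -/(dirE E) dE vP.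
Qed.

Lemma sum_cntv : (\sum_(v : pt) cntv v)%N = #|GLset F d|.
Proof.
rewrite /cntv (eq_bigr (fun v => \sum_E ((E \in GLset F d) && (dirE E == v))))%N; last first.
  by move=> v _; rewrite card_sumb; apply: eq_bigr => E _; rewrite inE.
rewrite exchange_big /= card_sumb; apply: eq_bigr => E _.
case: (E \in GLset F d) => /=; last by rewrite big1.
by rewrite (bigD1 (dirE E)) //= eqxx big1 // => v /negbTE; rewrite eq_sym => ->.
Qed.

Lemma cntv_bound (v : pt) : v != 0 -> (#|pt|.-1 * cntv v <= #|GLset F d|)%N.
Proof.
move=> v0; rewrite -sum_cntv -(cardC1 (0 : pt)) -sum1_card big_distrl /=.
apply: (@leq_trans (\sum_(x in predC1 (0%R : pt)) cntv x)%N).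
  by apply: leq_sum => x; rewrite inE mul1n => x0; apply: cntv_le.
by rewrite [X in (_ <= X)%N](bigID (mem (predC1 (0%R : pt)))) /= leq_addr.
Qed.

End GL.

Section LC.
Variables (F : finFieldType) (d : nat).
Local Notation pt := 'rV[F]_d.
Hypothesis d0 : (0 < d)%N.

Lemma lineE_Lines (E : 'M[F]_d) b : E \in GLset F d -> lineE E b \in Lines F d.
Proof. by rewrite inE => EU; rewrite lineE_eq isLine_line // dirE_neq0. Qed.

Lemma per_E (E : 'M[F]_d) (u w : pt) : w != 0 -> E \in GLset F d ->
  (\sum_(b in Outcomes F d) (lineE E b == line_of u w) <=
   \sum_(c : F | c != 0%R) (dirE E == c *: w))%N.
Proof.
move=> w0; rewrite inE => EU.
case: (pickP (fun b => (b \in Outcomes F d) && (lineE E b == line_of u w))) => [b0 /andP[Ob0 /eqP e0]|none]; last first.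
  by rewrite big1 // => b Ob; have := none b; rewrite Ob /= => ->.
have [c c0 ec] : exists2 c, c != 0 & dirE E = c *: w.
  by apply: (line_parallel (u := u) (u' := uE E b0) w0 (dirE_neq0 d0 EU)); rewrite -lineE_eq e0.
apply: (@leq_trans 1%N).
  rewrite (eq_bigr (fun b => nat_of_bool (b == b0))) ?sum_eq_le1 // => b Ob.
  congr nat_of_bool; apply/idP/idP => [/eqP e|/eqP ->]; last by rewrite e0.
  apply/eqP; apply: (lineE_inj EU Ob Ob0); by rewrite e e0.
by rewrite (bigD1 c) //= ec eqxx.
Qed.

Lemma line_count (l : {set pt}) : l \in Lines F d ->
  (#|pt|.-1 * \sum_(E in GLset F d) \sum_(b in Outcomes F d) (lineE E b == l)
     <= #|F|.-1 * #|GLset F d|)%N.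
Proof.
case/LinesP=> u [w [w0 ->]].
apply: (@leq_trans (#|pt|.-1 * \sum_(c : F | c != 0%R) cntv (c *: w))%N).
  rewrite leq_mul2l; apply/orP; right.
  apply: (@leq_trans (\sum_(E in GLset F d) \sum_(c : F | c != 0%R) (dirE E == c *: w))%N).
    by apply: leq_sum => E EG; apply: per_E.
  rewrite exchange_big /=; apply: leq_sum => c _.
  rewrite /cntv card_sumb big_mkcond /=; apply: leq_sum => E _.
  have -> : (E \in [set E0 in GLset F d | dirE E0 == c *: w]) = (E \in GLset F d) && (dirE E == c *: w) by rewrite in_set.
  by case: (E \in GLset F d).
have -> : (#|F|.-1 * #|GLset F d| = \sum_(c : F | c != 0%R) #|GLset F d|)%N.
  by rewrite sum_nat_const -(cardC1 (0:F)).
rewrite big_distrr /=.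
apply: leq_sum => c c0.
by apply: cntv_bound; rewrite scaler_eq0 negb_or c0 w0.
Qed.
End LC.

Lemma amgm (C : numFieldType) (lam m m' w w' : C) : 0 <= lam -> 0 <= m -> 0 <= m' ->
  0 < w -> 0 < w' -> m' ^+ 2 <= w' ->
  2 * lam * (m * m') <= lam ^+ 2 * (w * w') + m ^+ 2 / w.
Proof.
move=> l0 m0 m'0 w0 w'0 hm'.
have u0 : 0 < w * w' by rewrite mulr_gt0.
have Y0 : 0 <= m * m' by rewrite mulr_ge0.
apply: (@le_trans _ _ (lam ^+ 2 * (w * w') + (m * m') ^+ 2 / (w * w'))).
  rewrite -subr_ge0.
  have -> : lam ^+ 2 * (w * w') + (m * m') ^+ 2 / (w * w') - 2 * lam * (m * m')
      = (lam * (w * w') - m * m') ^+ 2 / (w * w').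
    by field; rewrite !lt0r_neq0.
  apply: divr_ge0; last exact: ltW.
  apply: real_exprn_even_ge0 => //.
  by rewrite rpredB // ger0_real // mulr_ge0 // ltW.
rewrite lerD2l exprMn invfM mulrACA ler_piMr //.
  by rewrite divr_ge0 ?exprn_ge0 // ltW.
by rewrite ler_pdivrMr // mul1r.
Qed.

Lemma sqr_sum (C : comPzRingType) (I : finType) (a : I -> C) :
  (\sum_i a i) ^+ 2 = \sum_i a i ^+ 2 + \sum_i \sum_(j | j != i) a i * a j.
Proof.
rewrite expr2 big_distrl /= -big_split /=; apply: eq_bigr => i _.
by rewrite big_distrr /= (bigD1 i) //= expr2.
Qed.

Lemma final_arith (C : numFieldType) (q M Dg T : C) : 1 < q -> q ^+ 2 <= M ->
  0 <= Dg -> 0 <= T ->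
  (q * ((M - 1) / (q - 1)) * Dg) ^+ 2 <= (q - 1) * T ->
  Dg ^+ 2 <= (M * ((M - 1) / (q - 1)))^-1 * T.
Proof.
move=> q1 qM D0 T0 H.
have q0 : 0 < q by apply: lt_trans q1; exact: ltr01.
have qm1 : 0 < q - 1 by rewrite subr_gt0.
have M1 : 1 < M.
  apply: lt_le_trans qM; rewrite expr2.
  by apply: (lt_trans q1); rewrite ltr_pMl.
have M0 : 0 < M by apply: lt_trans M1; exact: ltr01.
have Mm1 : 0 < M - 1 by rewrite subr_gt0.
set N := (M - 1) / (q - 1).
have N0 : 0 < N by rewrite divr_gt0.
rewrite ler_pdivlMl ?mulr_gt0 //.
have -> : M * N * Dg ^+ 2 = (q * N * Dg) ^+ 2 * (M / (q ^+ 2 * N)).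
  by field; rewrite !lt0r_neq0.
apply: le_trans (ler_wpM2r _ H) _.
  by rewrite divr_ge0 ?ltW // mulr_gt0 // exprn_gt0.
have -> : (q - 1) * T * (M / (q ^+ 2 * N)) = T * ((q - 1) ^+ 2 * M / (q ^+ 2 * (M - 1))).
  by rewrite /N; field; rewrite !lt0r_neq0.
apply: ler_piMr => //; rewrite ler_pdivrMr ?mulr_gt0 ?exprn_gt0 // mul1r.
rewrite -subr_ge0.
have -> : q ^+ 2 * (M - 1) - (q - 1) ^+ 2 * M = (M - q ^+ 2) * (2 * q - 1) + 2 * q ^+ 2 * (q - 1).
  by ring.
apply: addr_ge0; apply: mulr_ge0.
- by rewrite subr_ge0.
- rewrite subr_ge0 mulr2n mulrDl mul1r; apply: le_trans (ltW q1) _.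
  by rewrite lerDl ltW.
- by rewrite mulr_ge0 ?exprn_ge0 ?ltW.
- exact: ltW.
by rewrite invr_gt0.
Qed.

Section Main.
Variables (F : finFieldType) (d : nat) (R : rcfType).
Local Notation C := R[i].
Local Notation pt := 'rV[F]_d.
Variables (G : {set pt} -> pt -> F) (phi : pt -> F -> C).
Hypothesis hphi : pure_state phi.
Hypothesis hpos : forall z, 0 < phinorm phi z.
Hypothesis hd : (2 <= d)%N.

Let d0 : (0 < d)%N. Proof. exact: leq_trans hd. Qed.

Definition wz z := phinorm phi z ^+ 2.
Lemma wzE z : wz z = \sum_y `|phi z y| ^+ 2.
Proof. by rewrite /wz /phinorm sqrtCK. Qed.
Lemma wz_gt0 z : 0 < wz z.
Proof. by rewrite exprn_gt0. Qed.
Lemma sum_wz : \sum_z wz z = 1.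
Proof. by rewrite -hphi; apply: eq_bigr => z _; rewrite wzE. Qed.
Lemma m_le_w z y : `|phi z y| ^+ 2 <= wz z.
Proof.
by rewrite wzE (bigD1 y) //= lerDl sumr_ge0 // => x _; rewrite exprn_ge0.
Qed.

Lemma sum_line (h : pt -> C) u w : w != 0 ->
  \sum_(z in line_of u w) h z = \sum_t h (u + t *: w).
Proof.
move=> w0; rewrite big_imset /=; last first.
  move=> s t _ _ /addrI /eqP.
  by rewrite -subr_eq0 -scalerBl scaler_eq0 (negbTE w0) orbF subr_eq0 => /eqP.
by apply: eq_bigl => t; rewrite inE.
Qed.

Local Notation q := (#|F|%:R : C).

Lemma stepA E b : E \in GLset F d ->
  prob_outcome phi E b * accept_prob phi G E b =
  `|\sum_(z in lineE E b) phi z (G (lineE E b) z)| ^+ 2 / q.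
Proof.
rewrite inE => EU.
set l := lineE E b.
set p := prob_outcome phi E b.
have pE : p = \sum_t wz (setlast b t *m invmx E).
  by apply: eq_bigr => t _; rewrite wzE.
have p0 : 0 < p.
  rewrite pE; apply: (lt_le_trans (wz_gt0 (setlast b 0 *m invmx E))).
  by rewrite (bigD1 0) //= lerDl sumr_ge0 // => t _; rewrite ltW // wz_gt0.
set s := (sqrtC q)^-1.
have s0 : 0 <= s by rewrite invr_ge0 sqrtC_ge0 ler0n.
have inner t : \sum_y (e1 R G E b t y)^* * collapsed phi E b t y =
    s * (phi (setlast b t *m invmx E) (G l (setlast b t *m invmx E)) / sqrtC p).
  rewrite (bigD1 (G l (setlast b t *m invmx E))) //= big1 ?addr0.
    by rewrite /e1 vE_uE -zt_eq -/l eqxx geC0_conj.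
  by move=> y /negbTE ny; rewrite /e1 vE_uE -zt_eq -/l ny conjC0 mul0r.
rewrite /accept_prob (eq_bigr _ (fun t _ => inner t)) -mulr_sumr.
have Seq : \sum_(z in l) phi z (G l z) =
    \sum_t phi (setlast b t *m invmx E) (G l (setlast b t *m invmx E)).
  rewrite {1}/l lineE_eq sum_line ?dirE_neq0 //.
  by apply: eq_bigr => t _; rewrite zt_eq.
rewrite Seq.
rewrite -mulr_suml [s * _]mulrCA normrM exprMn (ger0_norm (x := s * _)); last first.
  by rewrite mulr_ge0 // invr_ge0 sqrtC_ge0 ltW.
rewrite exprMn exprVn sqrtCK /s exprVn sqrtCK.
field; rewrite (lt0r_neq0 p0) pnatr_eq0 -lt0n andbT; apply/card_gt0P; by exists 0.
Qed.

Lemma n2 : (1 < #|F|)%N.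
Proof. by apply/card_gt1P; exists 0, 1; rewrite !inE eq_sym oner_neq0. Qed.
Lemma q1 : 1 < q. Proof. by rewrite ltr1n n2. Qed.
Lemma q0 : 0 < q. Proof. exact: lt_trans ltr01 q1. Qed.
Lemma qd1 : 1 < q ^+ d. Proof. by rewrite exprn_egt1 ?q1 // -lt0n d0. Qed.

Local Notation Nc := ((q ^+ d - 1) / (q - 1)).
Lemma Nc0 : 0 < Nc.
Proof. by rewrite divr_gt0 // subr_gt0 ?qd1 ?q1. Qed.

Lemma predn_natr k : (0 < k)%N -> (k.-1)%:R = k%:R - 1 :> C.
Proof. by case: k => //= k _; rewrite -[k.+1]addn1 natrD addrK. Qed.

Lemma card_pt : #|pt|%:R = q ^+ d :> C.
Proof. by rewrite card_mx mul1n natrX. Qed.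
Lemma card_pt0 : (0 < #|pt|)%N.
Proof. by apply/card_gt0P; exists 0. Qed.

Definition mm (l : {set pt}) z := `|phi z (G l z)|.
Definition K (l : {set pt}) := (\sum_(z in l) mm l z) ^+ 2.
Definition cnt (l : {set pt}) : nat :=
  \sum_(E in GLset F d) \sum_(b in Outcomes F d) (lineE E b == l).

Lemma GL0 : (0 < #|GLset F d|)%N.
Proof. by apply/card_gt0P; exists 1%:M; rewrite inE unitmx1. Qed.

Lemma cnt_le l : l \in Lines F d -> (cnt l)%:R <= #|GLset F d|%:R / Nc.
Proof.
move=> hl; have := line_count d0 hl; rewrite -(ler_nat C) !natrM !predn_natr ?card_pt0 //;
  last by rewrite ltnW // n2.
rewrite card_pt => h; rewrite ler_pdivlMr ?Nc0 // mulrA ler_pdivrMr ?subr_gt0 ?q1 //.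
by rewrite mulrC [X in _ <= X]mulrC.
Qed.

Lemma gamma_le1 : V_QLDT phi G <= (#|GLset F d|%:R)^-1 *
  (q^-1 * \sum_(E in GLset F d) \sum_(b in Outcomes F d) K (lineE E b)).
Proof.
rewrite /V_QLDT; apply: ler_wpM2l; first by rewrite invr_ge0 ler0n.
rewrite mulr_sumr; apply: ler_sum => E EG; rewrite mulr_sumr; apply: ler_sum => b _.
rewrite stepA // mulrC; apply: ler_wpM2l; first by rewrite invr_ge0 ltW ?q0.
rewrite /K !expr2; apply: ler_pM => //; exact: ler_norm_sum.
Qed.

Lemma sumK_lines : \sum_(E in GLset F d) \sum_(b in Outcomes F d) K (lineE E b) =
  \sum_(l in Lines F d) K l * (cnt l)%:R.
Proof.
have e E b : E \in GLset F d -> K (lineE E b) =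
    \sum_(l in Lines F d) K l * (lineE E b == l)%:R.
  move=> EG; rewrite (bigD1 (lineE E b)) ?lineE_Lines //= eqxx mulr1 big1 ?addr0 //.
  by move=> l /andP[_ /negbTE]; rewrite eq_sym => ->; rewrite mulr0.
rewrite (eq_bigr (fun E => \sum_(b in Outcomes F d) \sum_(l in Lines F d) K l * (lineE E b == l)%:R)); last first.
  by move=> E EG; apply: eq_bigr => b _; apply: e.
rewrite (eq_bigr (fun E => \sum_(l in Lines F d) \sum_(b in Outcomes F d) K l * (lineE E b == l)%:R)); last first.
  by move=> E EG; rewrite exchange_big.
rewrite exchange_big /=; apply: eq_bigr => l _.
rewrite /cnt natr_sum mulr_sumr; apply: eq_bigr => E _.
by rewrite natr_sum mulr_sumr.
Qed.

Lemma gamma_le2 : V_QLDT phi G <= (q * Nc)^-1 * \sum_(l in Lines F d) K l.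
Proof.
apply: (le_trans gamma_le1); rewrite sumK_lines.
have GL0' : 0 < #|GLset F d|%:R :> C by rewrite ltr0n GL0.
apply: (@le_trans _ _ ((#|GLset F d|%:R)^-1 * (q^-1 *
   \sum_(l in Lines F d) K l * (#|GLset F d|%:R / Nc)))).
  apply: ler_wpM2l; first by rewrite invr_ge0 ltW.
  apply: ler_wpM2l; first by rewrite invr_ge0 ltW ?q0.
  apply: ler_sum => l hl; apply: ler_wpM2l; last exact: cnt_le.
  by apply: exprn_ge0; apply: sumr_ge0 => z _; exact: normr_ge0.
rewrite -mulr_suml le_eqVlt; apply/orP; left; apply/eqP.
field; rewrite !lt0r_neq0 ?subr_gt0 ?qd1 ?q1 ?q0 //.
Qed.


Local Notation ind b := ((b : bool)%:R : C).

Lemma sum_in (A : {set pt}) (h : pt -> C) : \sum_(z in A) h z = \sum_z ind (z \in A) * h z.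
Proof. by rewrite big_mkcond; apply: eq_bigr => z _; case: (z \in A); rewrite ?mul1r ?mul0r. Qed.

Lemma exch (f : {set pt} -> pt -> C) :
  \sum_(l in Lines F d) \sum_z ind (z \in l) * f l z = \sum_z \sum_(l in LinesThrough z) f l z.
Proof.
rewrite exchange_big /=; apply: eq_bigr => z _.
rewrite [RHS]big_mkcond [LHS]big_mkcond; apply: eq_bigr => l _.
have -> : (l \in LinesThrough z) = (l \in Lines F d) && (z \in l).
  by rewrite /LinesThrough in_set.
case: (l \in Lines F d); last by [].
by case: (z \in l); rewrite ?mul1r ?mul0r.
Qed.

Definition Tsum := \sum_(z : pt) \sum_(l in LinesThrough z) mm l z ^+ 2 / wz z.

Lemma LT_le (z : pt) : #|LinesThrough z|%:R <= Nc.
Proof.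
have := LinesThrough_card z; rewrite -(ler_nat C) natrM !predn_natr ?card_pt0 //;
  last by rewrite ltnW // n2.
by rewrite card_pt ler_pdivlMr // subr_gt0 q1.
Qed.

Definition aa (l : {set pt}) (z : pt) := ind (z \in l) * mm l z.

Lemma sumK_split : \sum_(l in Lines F d) K l =
  \sum_(l in Lines F d) \sum_z aa l z ^+ 2 +
  \sum_(l in Lines F d) \sum_z \sum_(z' | z' != z) aa l z * aa l z'.
Proof.
rewrite -big_split /=; apply: eq_bigr => l _.
by rewrite /K sum_in sqr_sum.
Qed.

Lemma D0_le : \sum_(l in Lines F d) \sum_z aa l z ^+ 2 <= Nc.
Proof.
apply: (@le_trans _ _ (\sum_(l in Lines F d) \sum_z ind (z \in l) * wz z)).
  apply: ler_sum => l _; apply: ler_sum => z _; rewrite /aa exprMn.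
  case: (z \in l); rewrite ?expr1n ?expr0n ?mul0r ?mul1r //=.
  exact: m_le_w.
rewrite exch; apply: (@le_trans _ _ (Nc * \sum_z wz z)); last by rewrite sum_wz mulr1.
rewrite mulr_sumr; apply: ler_sum => z _.
rewrite sumr_const -(mulr_natr (wz z)) [wz z * _]mulrC; apply: ler_wpM2r; first exact: ltW (wz_gt0 z).
exact: LT_le.
Qed.


Definition Psum := \sum_(l in Lines F d) \sum_(z : pt) \sum_(z' | z' != z)
   ind (z \in l) * ind (z' \in l) * (wz z * wz z').

Lemma card_minus (l : {set pt}) (z : pt) : l \in Lines F d -> z \in l ->
  \sum_(z' | z' != z) ind (z' \in l) = q - 1.
Proof.
move=> hl zl.
have : \sum_z' ind (z' \in l) = q.
  case/LinesP: hl => u [w [w0 el]].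
  by rewrite -natr_sum -card_sumb el line_card.
by rewrite (bigD1 z) //= zl => <-; rewrite addrC addrK.
Qed.

Lemma O_le (lam : C) : 0 <= lam ->
  2 * lam * (\sum_(l in Lines F d) \sum_z \sum_(z' | z' != z) aa l z * aa l z') <=
  lam ^+ 2 * Psum + (q - 1) * Tsum.
Proof.
move=> l0.
apply: (@le_trans _ _ (\sum_(l in Lines F d) \sum_(z : pt) \sum_(z' | z' != z)
   (lam ^+ 2 * (ind (z \in l) * ind (z' \in l) * (wz z * wz z')) +
    ind (z \in l) * ind (z' \in l) * (mm l z ^+ 2 / wz z)))).
  rewrite mulr_sumr; apply: ler_sum => l _; rewrite mulr_sumr; apply: ler_sum => z _.
  rewrite mulr_sumr; apply: ler_sum => z' _; rewrite /aa.
  case: (z \in l); case: (z' \in l); rewrite ?(mul0r, mulr0, mul1r, addr0) //.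
  apply: amgm => //; rewrite ?normr_ge0 ?wz_gt0 //; exact: m_le_w.
apply: (@le_trans _ _ (lam ^+ 2 * Psum + \sum_(l in Lines F d) \sum_(z : pt)
    ind (z \in l) * ((mm l z ^+ 2 / wz z) * (q - 1)))).
  rewrite le_eqVlt; apply/orP; left; apply/eqP.
  rewrite /Psum mulr_sumr -big_split /=; apply: eq_bigr => l hl.
  rewrite mulr_sumr -big_split /=; apply: eq_bigr => z _.
  rewrite big_split /= -mulr_sumr; congr (_ + _).
  case zl : (z \in l); last by rewrite mul0r big1 // => z' _; rewrite !mul0r.
  rewrite mul1r -(card_minus hl zl) mulr_sumr; apply: eq_bigr => z' _.
  by rewrite mul1r mulrC.
rewrite lerD2l exch mulr_sumr; apply: ler_sum => z _.
rewrite mulr_sumr; apply: ler_sum => l _; by rewrite mulrC.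
Qed.

Lemma P_le : Psum <= 1.
Proof.
have e : Psum = \sum_(z : pt) \sum_(z' | z' != z) (wz z * wz z') *
    \sum_(l in Lines F d) ind (z \in l) * ind (z' \in l).
  rewrite /Psum exchange_big /=; apply: eq_bigr => z _.
  rewrite exchange_big /=; apply: eq_bigr => z' _.
  by rewrite mulr_sumr; apply: eq_bigr => l _; rewrite mulrC.
rewrite e; apply: (@le_trans _ _ (\sum_(z : pt) \sum_(z' | z' != z) (wz z * wz z'))).
  apply: ler_sum => z _; apply: ler_sum => z' nz.
  apply: ler_piMr; first by rewrite mulr_ge0 // ltW // wz_gt0.
  have := pair_unique (z := z) (z' := z'); rewrite eq_sym nz => /(_ isT).
  rewrite -(ler_nat C) card_sumb natr_sum => h; apply: le_trans h.
  rewrite big_mkcond /=; apply: ler_sum => l _.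
  have -> : (l \in [set l0 in Lines F d | (z \in l0) && (z' \in l0)]) =
    (l \in Lines F d) && ((z \in l) && (z' \in l)) by rewrite in_set.
  by case: (l \in Lines F d); case: (z \in l); case: (z' \in l); rewrite /= ?(mul1r, mul0r, lexx, ler0n, ler01).
rewrite -(expr1n C 2) -{1}sum_wz expr2 mulr_suml; apply: ler_sum => z _.
rewrite mulr_sumr [X in _ <= X](bigD1 z) //= lerDr; apply: mulr_ge0; exact: ltW (wz_gt0 _).
Qed.


Definition hN (z : pt) (y : F) : nat := \sum_(l in LinesThrough z) (G l z == y).
Definition fbest (z : pt) : F := [arg max_(y > 0) hN z y].

Lemma hN_max z y : (hN z y <= hN z (fbest z))%N.
Proof. by rewrite /fbest; case: arg_maxnP => // i _ /(_ y isT). Qed.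

Lemma T_pointwise z :
  \sum_(l in LinesThrough z) mm l z ^+ 2 / wz z <= (hN z (fbest z))%:R.
Proof.
have e : \sum_(l in LinesThrough z) mm l z ^+ 2 / wz z =
    \sum_y (`|phi z y| ^+ 2 / wz z) * (hN z y)%:R.
  rewrite (eq_bigr (fun l => \sum_y (`|phi z y| ^+ 2 / wz z) * ind (G l z == y))); last first.
    move=> l _; rewrite (bigD1 (G l z)) //= eqxx mulr1 big1 ?addr0 //.
    by move=> y /negbTE; rewrite eq_sym => ->; rewrite mulr0.
  rewrite exchange_big /=; apply: eq_bigr => y _.
  by rewrite /hN natr_sum mulr_sumr.
rewrite e; apply: (@le_trans _ _ (\sum_y (`|phi z y| ^+ 2 / wz z) * (hN z (fbest z))%:R)).
  apply: ler_sum => y _; apply: ler_wpM2l.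
    by rewrite divr_ge0 ?exprn_ge0 // ltW // wz_gt0.
  by rewrite ler_nat hN_max.
rewrite -mulr_suml -mulr_suml -wzE divff ?mul1r //.
exact: lt0r_neq0 (wz_gt0 z).
Qed.

Lemma Lines_cnt : (#|Lines F d| * #|F| = \sum_(z : pt) #|LinesThrough z|)%N.
Proof.
have -> : (#|Lines F d| * #|F| = \sum_(l in Lines F d) #|F|)%N by rewrite sum_nat_const.
rewrite (eq_bigr (fun l : {set pt} => \sum_(z : pt) (z \in l))%N); last first.
  move=> l /LinesP[u [w [w0 ->]]]; by rewrite -card_sumb line_card.
rewrite exchange_big /=; apply: eq_bigr => z _.
rewrite card_sumb big_mkcond /=; apply: eq_bigr => l _.
have -> : (l \in LinesThrough z) = (l \in Lines F d) && (z \in l).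
  by rewrite /LinesThrough in_set.
by case: (l \in Lines F d).
Qed.

Lemma Lines_gt0 : (0 < #|Lines F d|)%N.
Proof.
apply/card_gt0P; exists (line_of 0 (elast F d)); apply: isLine_line.
exact: elast_neq0.
Qed.

Lemma Lq_le : #|Lines F d|%:R * q <= q ^+ d * Nc.
Proof.
rewrite -natrM Lines_cnt natr_sum; apply: (@le_trans _ _ (\sum_(z : pt) Nc)).
  by apply: ler_sum => z _; exact: LT_le.
by rewrite sumr_const -(mulr_natl Nc) card_pt.
Qed.

Lemma Agr_eq (f' : pt -> F) : (f' = fbest) ->
  #|Lines F d|%:R * q * Agr R f' G = \sum_(z : pt) (hN z (f' z))%:R.
Proof.
move=> ->; rewrite /Agr.
have L0 : (#|Lines F d|%:R : C) != 0 by rewrite pnatr_eq0 -lt0n Lines_gt0.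
rewrite mulrAC mulrA mulfV // mul1r mulr_suml.
rewrite (eq_bigr (fun l : {set pt} => \sum_(z : pt) ind (z \in l) * ind (fbest z == G l z))); last first.
  move=> l /LinesP[u [w [w0 el]]]; rewrite /Agr_line el line_card // divfK ?lt0r_neq0 ?q0 //.
  rewrite card_sumb natr_sum; apply: eq_bigr => z _; rewrite in_set.
  by case: (z \in line_of u w); rewrite ?mul1r ?mul0r.
rewrite exch; apply: eq_bigr => z _; rewrite /hN natr_sum; apply: eq_bigr => l _.
by rewrite eq_sym.
Qed.


Lemma Tsum_ge0 : 0 <= Tsum.
Proof.
apply: sumr_ge0 => z _; apply: sumr_ge0 => l _.
by apply: divr_ge0; [apply: exprn_ge0; exact: normr_ge0 | exact: ltW (wz_gt0 z)].
Qed.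

Lemma main_ineq : q^-1 <= V_QLDT phi G ->
  (V_QLDT phi G - q^-1) ^+ 2 <= (q ^+ d * Nc)^-1 * Tsum.
Proof.
move=> hg; set g := V_QLDT phi G.
set O := \sum_(l in Lines F d) \sum_z \sum_(z' | z' != z) aa l z * aa l z'.
set D0 := \sum_(l in Lines F d) \sum_z aa l z ^+ 2.
have qN0 : 0 < q * Nc by rewrite mulr_gt0 ?q0 ?Nc0.
have h1 : q * Nc * g <= D0 + O.
  by rewrite -ler_pdivlMl // -sumK_split; exact: gamma_le2.
set lam := q * Nc * (g - q^-1).
have l0 : 0 <= lam by apply: mulr_ge0; [exact: ltW | rewrite subr_ge0].
have hlO : lam <= O.
  have -> : lam = q * Nc * g - Nc by rewrite /lam; field; rewrite !lt0r_neq0 ?subr_gt0 ?q1 ?q0.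
  rewrite lerBlDl; apply: le_trans h1 _; rewrite lerD2r; exact: D0_le.
have h3 := O_le l0.
have h4 : lam ^+ 2 * Psum <= lam ^+ 2 by rewrite ler_piMr ?exprn_ge0 ?P_le.
have h5 : lam ^+ 2 <= (q - 1) * Tsum.
  have : 2 * lam * lam <= lam ^+ 2 + (q - 1) * Tsum.
    apply: (@le_trans _ _ (2 * lam * O)).
      by apply: ler_wpM2l => //; rewrite mulr_ge0 ?ler0n.
    by apply: (le_trans h3); rewrite lerD2r.
  by rewrite -mulrA -expr2 mulr_natl mulr2n lerD2l.
apply: final_arith => //.
- exact: q1.
- by rewrite ler_eXn2l ?q1.
- by rewrite subr_ge0.
- exact: Tsum_ge0.
Qed.

Lemma agr_part : exists f' : pt -> F, (q ^+ d * Nc)^-1 * Tsum <= Agr R f' G.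
Proof.
exists fbest.
have L0 : 0 < #|Lines F d|%:R * q by rewrite mulr_gt0 ?q0 // ltr0n Lines_gt0.
apply: (@le_trans _ _ ((#|Lines F d|%:R * q)^-1 * Tsum)).
  apply: ler_wpM2r; first exact: Tsum_ge0.
  by rewrite lef_pV2 ?Lq_le // posrE // mulr_gt0 ?Nc0 // exprn_gt0 // q0.
rewrite ler_pdivrMl // Agr_eq //.
by apply: ler_sum => z _; exact: T_pointwise.
Qed.

End Main.

Lemma mainTheorem7_core (F : finFieldType) (d : nat) (hd : (2 <= d)%N) (R : rcfType)
  (G : {set 'rV[F]_d} -> 'rV[F]_d -> F)
  (phi : 'rV[F]_d -> F -> R[i]) (hphi : pure_state phi)
  (hpos : forall z, 0 < phinorm phi z) :
  let gamma := V_QLDT phi G in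
  let q : R[i] := #|F|%:R in
  let N : R[i] := (q ^+ d - 1) / (q - 1) in
  q^-1 <= gamma ->
  (gamma - q^-1) ^+ 2 <=
    (q ^+ d * N)^-1 *
    \sum_(z : 'rV[F]_d) \sum_(l in LinesThrough z)
       `|phi z (G l z)| ^+ 2 / phinorm phi z ^+ 2
  /\ exists f' : 'rV[F]_d -> F, (gamma - q^-1) ^+ 2 <= Agr R f' G.
Proof.
move=> gamma q N hg.
have H := @main_ineq F d R G phi hphi hpos hd hg.
split; first exact: H.
have [f' hf'] := @agr_part F d R G phi hpos hd.
by exists f'; apply: le_trans hf'.
Qed.

Unset Implicit Arguments.

Theorem mainTheorem7 (F : finFieldType) (a : nat) (hF : #|F| = (2 ^ a)%N)
  (d : nat) (hd : (2 <= d)%N) (r : nat) (R : rcfType)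
  (G : {set 'rV[F]_d} -> 'rV[F]_d -> F) (hG : low_degree_family r G)
  (phi : 'rV[F]_d -> F -> R[i]) (hphi : pure_state phi)
  (hpos : forall z, 0 < phinorm phi z) :
  let gamma := V_QLDT phi G in
  let q : R[i] := #|F|%:R in
  let N : R[i] := (q ^+ d - 1) / (q - 1) in
  q^-1 <= gamma ->
  (gamma - q^-1) ^+ 2 <=
    (q ^+ d * N)^-1 *
    \sum_(z : 'rV[F]_d) \sum_(l in LinesThrough z)
       `|phi z (G l z)| ^+ 2 / phinorm phi z ^+ 2
  /\ exists f' : 'rV[F]_d -> F, (gamma - q^-1) ^+ 2 <= Agr R f' G.
Proof.
exact: (@mainTheorem7_core F d hd R G phi hphi hpos).
Qed.
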